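(* Let $a,b,c,d$ be independent random integers, each uniformly distributed on $\{0,1,\ldots,999\}$, and let $e=a+b+c+d$. Write $a=100a_1+10a_2+a_3$ with digits $a_1,a_2,a_3\in\{0,\ldots,9\}$, and $e=1000e_0+100e_1+10e_2+e_3$ with $e_0\in\{0,1,2,3\}$ and $e_1,e_2,e_3\in\{0,\ldots,9\}$. For $i\in\{1,2,3\}$ define the carry $$c_{i-1}=\left\lfloor \frac{(a \bmod 10^{4-i})+(b \bmod 10^{4-i})+(c \bmod 10^{4-i})+(d \bmod 10^{4-i})}{10^{4-i}}\right\rfloor\in\{0,1,2,3\}.$$ Then $I(a_1;e_0)>0$, and $I(a_i;e_j)=0$ for all $i\in\{1,2,3\}$ and $j\in\{1,2,3\}$. Moreover, $I(a_i;e_i\mid c_{i-1})>0$ for $i=1,2,3$.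
   Context: $I(X;Y)$ denotes the mutual information and $I(X;Y\mid Z)$ the conditional mutual information of discrete random variables. Digits are indexed so that smaller subscripts correspond to higher place values ($a_1$ is the hundreds digit of $a$, $e_0$ the thousands digit of $e$). The quantity $c_{i-1}$ is the carry propagated from digit place $i$ into the next higher place $i-1$ when adding $a,b,c,d$ column by column (including carries from lower places); it is not a digit of the operand $c$. *)

(* Defs.v *)
From HB Require Import structures.
From mathcomp Require Import all_boot all_order all_algebra.
From mathcomp Require Import reals exp.
Set Implicit Arguments. Unset Strict Implicit. Unset Printing Implicit Defensive.
Import Order.TTheory GRing.Theory Num.Theory.
Local Open Scope ring_scope.

Definition Omega : finType := ('I_1000 * 'I_1000 * 'I_1000 * 'I_1000)%type.

Definition A (w : Omega) : nat := nat_of_ord w.1.1.1.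
Definition B (w : Omega) : nat := nat_of_ord w.1.1.2.
Definition C (w : Omega) : nat := nat_of_ord w.1.2.
Definition D (w : Omega) : nat := nat_of_ord w.2.
Definition E (w : Omega) : nat := (A w + B w + C w + D w)%N.

Definition adigit (i : nat) (w : Omega) : nat := ((A w %/ 10 ^ (3 - i)) %% 10)%N.
Definition e0 (w : Omega) : nat := (E w %/ 1000)%N.
Definition edigit (j : nat) (w : Omega) : nat := ((E w %/ 10 ^ (3 - j)) %% 10)%N.
Definition carry (i : nat) (w : Omega) : nat :=
  let m := (10 ^ (4 - i))%N in
  ((A w %% m + B w %% m + C w %% m + D w %% m) %/ m)%N.

Section Info.
Variable R : realType.
Variable T : finType.

Definition prob (P : pred T) : R := #|[set w | P w]|%:R / #|T|%:R.

Definition range (X : T -> nat) : seq nat := undup [seq X w | w <- enum T].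

Definition MI (X Y : T -> nat) : R :=
  \sum_(x <- range X) \sum_(y <- range Y)
    let pxy := prob (fun w => (X w == x) && (Y w == y)) in
    pxy * ln (pxy / (prob (fun w => X w == x) * prob (fun w => Y w == y))).

Definition CMI (X Y Z : T -> nat) : R :=
  \sum_(x <- range X) \sum_(y <- range Y) \sum_(z <- range Z)
    let pxyz := prob (fun w => [&& X w == x, Y w == y & Z w == z]) in
    pxyz * ln (prob (fun w => Z w == z) * pxyz /
                (prob (fun w => (X w == x) && (Z w == z)) *
                 prob (fun w => (Y w == y) && (Z w == z)))).
End Info.

(* Main.v *)
Require Import Defs.
From HB Require Import structures.
From mathcomp Require Import all_boot all_order all_algebra.
From mathcomp Require Import reals exp sequences.
From mathcomp Require Import zify ring lra.
Import Order.TTheory GRing.Theory Num.Theory.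

Definition shB (k : nat) (w : Omega) : Omega :=
  (w.1.1.1, Ordinal (ltn_pmod (B w + k) (isT : 0 < 1000)), w.1.2, w.2).
Definition shA (k : nat) (w : Omega) : Omega :=
  (Ordinal (ltn_pmod (A w + k) (isT : 0 < 1000)), w.1.1.2, w.1.2, w.2).

Lemma shB_inj k : injective (shB k).
Proof.
move=> [[[a b] c] d] [[[a' b'] c'] d'] [] -> H -> ->.
congr (_,_,_,_); apply: val_inj => /=.
move: H; rewrite /B /=; have := ltn_ord b; have := ltn_ord b'; lia.
Qed.

Lemma edigit_shB j w : (1 <= j <= 3)%N ->
  edigit j (shB (10 ^ (3 - j)) w) = (edigit j w).+1 %% 10.
Proof.
case: w => [[[a b] c] d] hj.
have := ltn_ord a; have := ltn_ord b; have := ltn_ord c; have := ltn_ord d.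
case: j hj => [|[|[|[|j]]]] //= _; rewrite /edigit /E /A /B /C /D /= /B /= ?expnS ?expn0 ?muln1; lia.
Qed.

Lemma adigit_shA w : adigit 1 (shA 100 w) = (adigit 1 w).+1 %% 10.
Proof.
case: w => [[[a b] c] d].
rewrite /adigit /A /= /A /= ?expnS ?expn0 ?muln1.
have := ltn_ord a. lia.
Qed.

Lemma zero_cell i w : (1 <= i <= 3)%N ->
  ~~ [&& adigit i w == 9, edigit i w == 0 & carry i w == 0].
Proof.
case: w => [[[a b] c] d] hi.
apply/negP => /and3P[/eqP h1 /eqP h2 /eqP h3]; move: h1 h2 h3.
have := ltn_ord a; have := ltn_ord b; have := ltn_ord c; have := ltn_ord d.
case: i hi => [|[|[|[|j]]]] //= _; rewrite /adigit /edigit /carry /E /A /B /C /D /= ?expnS ?expn0 ?muln1; lia.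
Qed.

Local Open Scope ring_scope.

Section Gen.
Variable R : realType.

Lemma gibbs_le (p q : R) : 0 <= p -> 0 < q -> p - q <= p * ln (p / q).
Proof.
move=> p0 q0; have [->|pn0] := eqVneq p 0; first by rewrite mul0r sub0r oppr_le0 ltW.
have pp : 0 < p by rewrite lt_def pn0.
have t0 : 0 < p / q by rewrite divr_gt0.
set u := ln (p / q).
have eu : expR u = p / q by rewrite /u lnK // posrE.
have h := expR_ge1Dx (- u).
rewrite expRN eu invf_div in h.
have : p * (1 - u) <= p * (q / p) by rewrite ler_pM2l //; lra.
rewrite mulrCA divff ?mulr1 //; lra.
Qed.

Lemma gibbs_lt (p q : R) : 0 <= p -> 0 < q -> p != q -> p - q < p * ln (p / q).
Proof.
move=> p0 q0 pq; have [->|pn0] := eqVneq p 0; first by rewrite mul0r sub0r oppr_lt0.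
have pp : 0 < p by rewrite lt_def pn0.
have t0 : 0 < p / q by rewrite divr_gt0.
set u := ln (p / q).
have eu : expR u = p / q by rewrite /u lnK // posrE.
have un0 : - u != 0.
  rewrite oppr_eq0; apply/eqP => u0; move: eu; rewrite u0 expR0 => /esym.
  move=> /(congr1 ( *%R^~ q)); rewrite /= divfK ?gt_eqF // mul1r => pq'.
  by rewrite pq' eqxx in pq.
have h := expR_gt1Dx un0.
rewrite expRN eu invf_div in h.
have : p * (1 - u) < p * (q / p) by rewrite ltr_pM2l //; lra.
rewrite mulrCA divff ?mulr1 //; lra.
Qed.

Lemma ler_sum_in (s : seq nat) (F G : nat -> R) :
  (forall x, x \in s -> G x <= F x) -> \sum_(x <- s) G x <= \sum_(x <- s) F x.
Proof. by move=> h; rewrite big_seq [X in _ <= X]big_seq; apply: ler_sum. Qed.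

Lemma ltr_sum_in (s : seq nat) (F G : nat -> R) x0 : uniq s -> x0 \in s ->
  (forall x, x \in s -> G x <= F x) -> G x0 < F x0 ->
  \sum_(x <- s) G x < \sum_(x <- s) F x.
Proof.
move=> us xs h hlt; rewrite (bigD1_seq x0) //= [X in _ < X](bigD1_seq x0) //=.
apply: ltr_leD => //; rewrite big_seq_cond [X in _ <= X]big_seq_cond.
by apply: ler_sum => x /andP[xs' _]; apply: h.
Qed.

Variable T : finType.

Lemma card_sum (P : pred T) : #|[set w | P w]| = (\sum_(w : T) (P w : nat))%N.
Proof.
rewrite -sum1_card big_mkcond /=; apply: eq_bigr => w _; rewrite inE; by case: (P w).
Qed.

Lemma eq_prob (P Q : pred T) : P =1 Q -> prob R P = prob R Q.
Proof. by move=> h; rewrite /prob; congr (_%:R / _); apply: eq_card => w; rewrite !inE h. Qed.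

Lemma prob_ge0 (P : pred T) : 0 <= prob R P.
Proof. by rewrite /prob divr_ge0 ?ler0n. Qed.

Lemma prob_gt0 (P : pred T) w : P w -> 0 < prob R P.
Proof.
move=> Pw; rewrite /prob divr_gt0 // ltr0n; apply/card_gt0P; exists w => //.
by rewrite inE.
Qed.

Lemma prob_eq0 (P : pred T) : (forall w, ~~ P w) -> prob R P = 0.
Proof.
move=> h; rewrite /prob; suff -> : #|[set w | P w]| = 0%N by rewrite mul0r.
apply/eqP; rewrite cards_eq0; apply/eqP/setP => w; rewrite !inE; exact/negbTE/h.
Qed.

Lemma prob1 (w0 : T) : prob R (fun _ : T => true) = 1.
Proof.
rewrite /prob; have -> : #|[set w : T | true]| = #|T| by apply: eq_card => w; rewrite inE.
rewrite divff // pnatr_eq0 -lt0n; apply/card_gt0P; by exists w0.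
Qed.

Lemma partition_card (Y : T -> nat) (s : seq nat) (Q : pred T) :
  uniq s -> (forall w, Y w \in s) ->
  (\sum_(y <- s) #|[set w | Q w && (Y w == y)]| = #|[set w | Q w]|)%N.
Proof.
move=> us hs; under eq_bigr do rewrite card_sum.
rewrite exchange_big card_sum; apply: eq_bigr => w _.
rewrite (bigD1_seq (Y w)) //= eqxx andbT big1 ?addn0 // => y /negbTE.
by rewrite eq_sym => ->; rewrite andbF.
Qed.

Lemma partition_prob (Y : T -> nat) (s : seq nat) (Q : pred T) :
  uniq s -> (forall w, Y w \in s) ->
  \sum_(y <- s) prob R (fun w => Q w && (Y w == y)) = prob R Q.
Proof.
move=> us hs; rewrite /prob -mulr_suml -natr_sum partition_card //.
Qed.

Lemma range_uniq (X : T -> nat) : uniq (range X).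
Proof. exact: undup_uniq. Qed.

Lemma mem_range (X : T -> nat) w : X w \in range X.
Proof. by rewrite mem_undup; apply: map_f; rewrite mem_enum. Qed.

Lemma range_ex {X : T -> nat} {x} : x \in range X -> exists w, X w = x.
Proof. by rewrite mem_undup => /mapP[w _ ->]; exists w. Qed.

Lemma MI_gt0 (X Y : T -> nat) x0 y0 : x0 \in range X -> y0 \in range Y ->
  prob R (fun w => (X w == x0) && (Y w == y0)) !=
    prob R (fun w => X w == x0) * prob R (fun w => Y w == y0) ->
  0 < MI R X Y.
Proof.
move=> hx hy hne.
have [w0 _] := range_ex hx.
pose G x y := prob R (fun w => (X w == x) && (Y w == y)) -
   prob R (fun w => X w == x) * prob R (fun w => Y w == y).
have G0 : \sum_(x <- range X) \sum_(y <- range Y) G x y = 0.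
  rewrite /G; under eq_bigr do rewrite sumrB -mulr_sumr.
  under eq_bigr => x _.
    rewrite partition_prob ?range_uniq //; last exact: mem_range.
    rewrite (eq_bigr (fun y => prob R (fun w => true && (Y w == y)))) //.
    rewrite partition_prob ?range_uniq //; last exact: mem_range.
    rewrite prob1 // mulr1 subrr.
  over.
  by rewrite big1.
have hle : forall x y, x \in range X -> y \in range Y ->
   G x y <= prob R (fun w => (X w == x) && (Y w == y)) *
     ln (prob R (fun w => (X w == x) && (Y w == y)) /
        (prob R (fun w => X w == x) * prob R (fun w => Y w == y))).
  move=> x y /range_ex[wx ex] /range_ex[wy ey]; apply: gibbs_le; first exact: prob_ge0.
  by apply: mulr_gt0; [apply: (prob_gt0 _ wx) | apply: (prob_gt0 _ wy)]; rewrite /= ?ex ?ey.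
rewrite -G0 /MI; apply: (@ltr_sum_in _ _ _ x0) => //; first exact: range_uniq.
  by move=> x hx'; apply: ler_sum_in => y hy'; apply: hle.
apply: (@ltr_sum_in _ _ _ y0) => //; first exact: range_uniq.
  by move=> y hy'; apply: hle.
have [wx ex] := range_ex hx; have [wy ey] := range_ex hy.
apply: gibbs_lt => //; first exact: prob_ge0.
by apply: mulr_gt0; [apply: (prob_gt0 _ wx) | apply: (prob_gt0 _ wy)]; rewrite /= ?ex ?ey.
Qed.

Lemma MI_eq0 (X Y : T -> nat) :
  (forall x y, x \in range X -> y \in range Y ->
    prob R (fun w => (X w == x) && (Y w == y)) =
    prob R (fun w => X w == x) * prob R (fun w => Y w == y)) ->
  MI R X Y = 0.
Proof.
move=> h; rewrite /MI big_seq big1 // => x hx; rewrite big_seq big1 // => y hy.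
have [wx ex] := range_ex hx; have [wy ey] := range_ex hy.
have q0 : 0 < prob R (fun w => X w == x) * prob R (fun w => Y w == y).
  by apply: mulr_gt0; [apply: (prob_gt0 _ wx) | apply: (prob_gt0 _ wy)]; rewrite /= ?ex ?ey.
by rewrite h // divff ?gt_eqF // ln1 mulr0.
Qed.

Lemma CMI_gt0 (X Y Z : T -> nat) x0 y0 z0 :
  x0 \in range X -> y0 \in range Y -> z0 \in range Z ->
  (forall w, ~~ [&& X w == x0, Y w == y0 & Z w == z0]) ->
  0 < prob R (fun w => (X w == x0) && (Z w == z0)) ->
  0 < prob R (fun w => (Y w == y0) && (Z w == z0)) ->
  0 < CMI R X Y Z.
Proof.
move=> hx hy hz hzero hxz hyz.
have [w0 _] := range_ex hx.
pose pxyz x y z := prob R (fun w => [&& X w == x, Y w == y & Z w == z]).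
pose pxz x z := prob R (fun w => (X w == x) && (Z w == z)).
pose pyz y z := prob R (fun w => (Y w == y) && (Z w == z)).
pose pz z := prob R (fun w => Z w == z).
pose G x y z := pxyz x y z - pxz x z * pyz y z / pz z.
have S1 : \sum_(x <- range X) \sum_(y <- range Y) \sum_(z <- range Z) pxyz x y z = 1.
  rewrite -(prob1 w0).
  rewrite -(@partition_prob X _ (fun _ => true) (range_uniq X) (@mem_range X)).
  apply: eq_bigr => x _.
  rewrite -(@partition_prob Y _ (fun w => X w == x) (range_uniq Y) (@mem_range Y)).
  apply: eq_bigr => y _.
  rewrite -(@partition_prob Z _ (fun w => (X w == x) && (Y w == y)) (range_uniq Z) (@mem_range Z)).
  by apply: eq_bigr => z _; apply: eq_prob => w; rewrite andbA.
have S2 : \sum_(x <- range X) \sum_(y <- range Y) \sum_(z <- range Z)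
     (pxz x z * pyz y z / pz z) = 1.
  under eq_bigr do rewrite exchange_big.
  rewrite exchange_big /=.
  transitivity (\sum_(z <- range Z) pz z); last first.
    rewrite -(prob1 w0) -(@partition_prob Z _ (fun _ => true) (range_uniq Z) (@mem_range Z)).
    by apply: eq_bigr => z _; apply: eq_prob.
  apply: eq_bigr => z _.
  under eq_bigr => x _ do rewrite -mulr_suml -mulr_sumr.
  rewrite -mulr_suml -mulr_suml.
  have -> : \sum_(y <- range Y) pyz y z = pz z.
    rewrite /pyz /pz -(@partition_prob Y _ (fun w => Z w == z) (range_uniq Y) (@mem_range Y)).
    by apply: eq_bigr => y _; apply: eq_prob => w; rewrite andbC.
  have -> : \sum_(x <- range X) pxz x z = pz z.
    rewrite /pxz /pz -(@partition_prob X _ (fun w => Z w == z) (range_uniq X) (@mem_range X)).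
    by apply: eq_bigr => x _; apply: eq_prob => w; rewrite andbC.
  have [->|pzn0] := eqVneq (pz z) 0; first by rewrite mulr0 mul0r.
  by rewrite mulfK.
have G0 : \sum_(x <- range X) \sum_(y <- range Y) \sum_(z <- range Z) G x y z = 0.
  rewrite /G; under eq_bigr do under eq_bigr do rewrite sumrB.
  under eq_bigr do rewrite sumrB.
  by rewrite sumrB S1 S2 subrr.
have hle : forall x y z, x \in range X -> y \in range Y -> z \in range Z ->
   G x y z <= pxyz x y z * ln (pz z * pxyz x y z / (pxz x z * pyz y z)).
  move=> x y z _ _ /range_ex[wz ez].
  have pzp : 0 < pz z by apply: (prob_gt0 _ wz); rewrite /= ez.
  have [hp|hp] := eqVneq (pxyz x y z) 0.
    rewrite hp mul0r /G hp sub0r oppr_le0.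
    by apply: divr_ge0; [apply: mulr_ge0|]; apply: prob_ge0.
  have [w hw] : exists w, [&& X w == x, Y w == y & Z w == z].
    apply/existsP; apply: contraNT hp => /existsPn hn; apply/eqP; exact: prob_eq0.
  case/and3P: (hw) => hX hY hZ.
  have p1 : 0 < pxz x z by apply: (prob_gt0 _ w); rewrite /= hX hZ.
  have p2 : 0 < pyz y z by apply: (prob_gt0 _ w); rewrite /= hY hZ.
  have -> : pz z * pxyz x y z / (pxz x z * pyz y z) = pxyz x y z / (pxz x z * pyz y z / pz z).
    by field; rewrite ?gt_eqF.
  apply: gibbs_le; first exact: prob_ge0.
  by apply: divr_gt0 => //; apply: mulr_gt0.
rewrite -G0 /CMI; apply: (@ltr_sum_in _ _ _ x0) => //; first exact: range_uniq.
  by move=> x hx'; apply: ler_sum_in => y hy'; apply: ler_sum_in => z hz'; apply: hle.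
apply: (@ltr_sum_in _ _ _ y0) => //; first exact: range_uniq.
  by move=> y hy'; apply: ler_sum_in => z hz'; apply: hle.
apply: (@ltr_sum_in _ _ _ z0) => //; first exact: range_uniq.
  by move=> z hz'; apply: hle.
have p0 : prob R (fun w => [&& X w == x0, Y w == y0 & Z w == z0]) = 0 by apply: prob_eq0.
rewrite p0 mul0r /G /pxyz p0.
have [wz ez] := range_ex hz.
have pzp : 0 < pz z0 by apply: (prob_gt0 _ wz); rewrite /= ez.
rewrite sub0r oppr_lt0; apply: divr_gt0 => //; apply: mulr_gt0; [exact: hxz | exact: hyz].
Qed.

End Gen.

Lemma count_shift (T : finType) (sh : T -> T) (Y : T -> nat) (Q : pred T) :
  injective sh -> (forall w, Y (sh w) = (Y w).+1 %% 10)%N ->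
  (forall w, Q (sh w) = Q w) -> (forall w, Y w < 10)%N ->
  forall y, (y < 10)%N -> (10 * #|[set w | Q w && (Y w == y)]| = #|[set w | Q w]|)%N.
Proof.
move=> inj hY hQ hb.
pose f y := #|[set w | Q w && (Y w == y)]|.
have step : forall y, (y < 10)%N -> f (y.+1 %% 10)%N = f y.
  move=> y hy; rewrite /f -(card_preimset _ inj); apply: eq_card => w; rewrite !inE hQ hY.
  congr (_ && _); have hw := hb w; apply/eqP/eqP => h; lia.
have fall : forall y, (y < 10)%N -> f y = f 0%N.
  elim => // y IH hy; have := step y (ltnW hy); rewrite modn_small // => ->; exact: IH (ltnW hy).
move=> y hy; rewrite -(@partition_card _ Y (iota 0 10) Q) ?iota_uniq //; last first.
  by move=> w; rewrite mem_iota add0n hb.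
rewrite (eq_big_seq (fun=> f 0%N)); last first.
  by move=> z; rewrite mem_iota add0n => /fall.
by rewrite big_const_seq count_predT size_iota iter_addn_0 mulnC -(fall y hy).
Qed.

Lemma in_range (T : finType) (X : T -> nat) w x : X w = x -> x \in range X.
Proof. by move=> <-; apply: mem_range. Qed.

Definition o (n : nat) : 'I_1000 := Ordinal (ltn_pmod n (isT : (0 < 1000)%N)).
Definition mkw (a b c d : nat) : Omega := (o a, o b, o c, o d).

Lemma e0_shA w : adigit 1 w = 9%N -> e0 w = 0%N -> e0 (shA 100 w) = 0%N.
Proof.
case: w => [[[a b] c] d].
have := ltn_ord a; have := ltn_ord b; have := ltn_ord c; have := ltn_ord d.
rewrite /adigit /e0 /E /A /B /C /D /= /A /= ?expnS ?expn0 ?muln1; lia.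
Qed.

Lemma card_Omega_gt0 : (0 < #|Omega|)%N.
Proof. by apply/card_gt0P; exists (mkw 0 0 0 0). Qed.

Lemma indep_counts (R : realType) (X Y : Omega -> nat) x y :
  (10 * #|[set w | (X w == x) && (Y w == y)]| = #|[set w | X w == x]|)%N ->
  (10 * #|[set w | Y w == y]| = #|Omega|)%N ->
  prob R (fun w => (X w == x) && (Y w == y)) =
    prob R (fun w => X w == x) * prob R (fun w => Y w == y).
Proof.
move=> h1 h2; rewrite /prob -h1 -h2.
have hN := card_Omega_gt0; rewrite -h2 in hN.
have cy : (#|[set w | Y w == y]|)%:R != 0 :> R.
  by rewrite pnatr_eq0 -lt0n; move: hN; rewrite muln_gt0 => /andP[].
by rewrite !natrM; field.
Qed.

Lemma shift_edigit_count i j x y : (1 <= i <= 3)%N -> (1 <= j <= 3)%N -> (y < 10)%N ->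
  (10 * #|[set w | (adigit i w == x) && (edigit j w == y)]| = #|[set w | adigit i w == x]|)%N.
Proof.
move=> hi hj hy.
apply: (@count_shift _ (shB (10 ^ (3 - j))) (edigit j) (fun w => adigit i w == x)) => //.
- exact: shB_inj.
- by move=> w; apply: edigit_shB.
- by move=> w; apply: ltn_pmod.
Qed.

Lemma digit_count_all j y : (1 <= j <= 3)%N -> (y < 10)%N ->
  (10 * #|[set w | edigit j w == y]| = #|Omega|)%N.
Proof.
move=> hj hy.
have := (@count_shift _ (shB (10 ^ (3 - j))) (edigit j) (fun _ => true)).
move=> /(_ (shB_inj _) (fun w => edigit_shB j w hj) (fun w => erefl) (fun w => ltn_pmod _ (isT : (0 < 10)%N)) y hy).
have -> : #|[set w : Omega | true]| = #|Omega| by apply: eq_card => w; rewrite inE.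
by move=> <-; f_equal; apply: eq_card => w; rewrite !inE.
Qed.

Lemma a1_count y : (y < 10)%N -> (10 * #|[set w | adigit 1 w == y]| = #|Omega|)%N.
Proof.
move=> hy.
have := (@count_shift _ (shA 100) (adigit 1) (fun _ => true)).
have shA_inj : injective (shA 100).
  move=> [[[a b] c] d] [[[a' b'] c'] d'] [] H -> -> ->.
  congr (_,_,_,_); apply: val_inj => /=.
  move: H; rewrite /A /=; have := ltn_ord a; have := ltn_ord a'; lia.
move=> /(_ shA_inj adigit_shA (fun w => erefl) (fun w => ltn_pmod _ (isT : (0 < 10)%N)) y hy).
have -> : #|[set w : Omega | true]| = #|Omega| by apply: eq_card => w; rewrite inE.
by move=> <-; f_equal; apply: eq_card => w; rewrite !inE.
Qed.

Lemma prob_ne (R : realType) (P Q : pred Omega) :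
  #|[set w | P w]| != #|[set w | Q w]| -> prob R P != prob R Q.
Proof.
move=> hne; rewrite /prob; apply/eqP => h; move/eqP: hne; apply.
have hN : (#|Omega|)%:R != 0 :> R by rewrite pnatr_eq0 -lt0n card_Omega_gt0.
move: h => /(congr1 ( *%R^~ (#|Omega|)%:R)); rewrite /= !divfK //.
by move/eqP; rewrite eqr_nat => /eqP.
Qed.

Theorem theorem1 (R : realType) :
  0 < MI R (adigit 1) e0 /\
  (forall i j : nat, (1 <= i <= 3)%N -> (1 <= j <= 3)%N ->
     MI R (adigit i) (edigit j) = 0) /\
  (forall i : nat, (1 <= i <= 3)%N ->
     0 < CMI R (adigit i) (edigit i) (carry i)).
Proof.
split; last split.
-
  pose S9 := [set w | (adigit 1 w == 9%N) && (e0 w == 0%N)].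
  pose S0 := [set w | (adigit 1 w == 0%N) && (e0 w == 0%N)].
  have shA_inj : injective (shA 100).
    move=> [[[a b] c] d] [[[a' b'] c'] d'] [] H -> -> ->.
    congr (_,_,_,_); apply: val_inj => /=.
    move: H; rewrite /A /=; have := ltn_ord a; have := ltn_ord a'; lia.
  have hlt : (#|S9| < #|S0|)%N.
    rewrite -(card_preimset S0 shA_inj); apply: proper_card; apply/properP; split.
      apply/subsetP => w; rewrite !inE => /andP[/eqP h1 /eqP h2].
      by rewrite adigit_shA h1 e0_shA.
    exists (mkw 900 999 0 0); rewrite !inE; by vm_compute.
  have n90 : #|[set w | adigit 1 w == 9%N]| = #|[set w | adigit 1 w == 0%N]|.
    by apply/eqP; rewrite -(eqn_pmul2l (isT : (0 < 10)%N)) !a1_count.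
  have r9 : 9%N \in range (adigit 1) by apply: (in_range _ _ (mkw 900 0 0 0)); vm_compute.
  have r0 : 0%N \in range (adigit 1) by apply: (in_range _ _ (mkw 0 0 0 0)); vm_compute.
  have e00 : 0%N \in range e0 by apply: (in_range _ _ (mkw 0 0 0 0)); vm_compute.
  have [heq|hne] := eqVneq (prob R (fun w => (adigit 1 w == 9%N) && (e0 w == 0%N)))
      (prob R (fun w => adigit 1 w == 9%N) * prob R (fun w => e0 w == 0%N)).
    apply: (@MI_gt0 R _ _ _ _ _ r0 e00).
    have -> : prob R (fun w => adigit 1 w == 0%N) = prob R (fun w => adigit 1 w == 9%N).
      by rewrite /prob n90.
    rewrite -heq; apply: prob_ne; rewrite neq_ltn; apply/orP; right; exact: hlt.
  exact: (@MI_gt0 R _ _ _ _ _ r9 e00 hne).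
-
  move=> i j hi hj; apply: MI_eq0 => x y hx hy.
  have [wy <-] := @range_ex _ _ _ hy.
  have hy10 : (edigit j wy < 10)%N by apply: ltn_pmod.
  apply: indep_counts; first exact: shift_edigit_count.
  exact: digit_count_all.
-
  move=> i hi.
  apply: (@CMI_gt0 R _ _ _ _ 9%N 0%N 0%N).
  + case: i hi => [|[|[|[|i]]]] // _.
    * by apply: (in_range _ _ (mkw 900 0 0 0)); vm_compute.
    * by apply: (in_range _ _ (mkw 90 0 0 0)); vm_compute.
    * by apply: (in_range _ _ (mkw 9 0 0 0)); vm_compute.
  + case: i hi => [|[|[|[|i]]]] // _; by apply: (in_range _ _ (mkw 0 0 0 0)); vm_compute.
  + case: i hi => [|[|[|[|i]]]] // _; by apply: (in_range _ _ (mkw 0 0 0 0)); vm_compute.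
  + by move=> w; apply: zero_cell.
  + case: i hi => [|[|[|[|i]]]] // _.
    * by apply: (@prob_gt0 R _ _ (mkw 900 0 0 0)); vm_compute.
    * by apply: (@prob_gt0 R _ _ (mkw 90 0 0 0)); vm_compute.
    * by apply: (@prob_gt0 R _ _ (mkw 9 0 0 0)); vm_compute.
  + case: i hi => [|[|[|[|i]]]] // _; by apply: (@prob_gt0 R _ _ (mkw 0 0 0 0)); vm_compute.
Qed.
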